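(* Let $n\ge 2$. Let $\hat a_{i,i-1}>0$ and $\hat b_{i,i-1}\in\mathbb{R}$ for $2\le i\le n$, and for $1\le m\le k\le n$ put $\hat a_{k,m}:=\prod_{i=m+1}^{k}\hat a_{i,i-1}$ (so $\hat a_{k,k}=1$). Let $L_i\in\mathbb{R}$ ($2\le i\le n$) and $R_i\in\mathbb{R}$ ($1\le i\le n-1$) satisfy $L_i=\hat a_{i,i-1}R_{i-1}+\hat b_{i,i-1}$ for $2\le i\le n$, and $L_i\le R_i$ for $2\le i\le n-1$. Suppose $\prod_{i=1}^{j}\hat a_{n-(i-1),n-i}=\hat a_{n,n-j}\le 1$ for all $1\le j\le n-1$. Then for every $1\le j\le n-1$, $$\sum_{i=1}^{j}\bigl(L_{n-(i-1)}-R_{n-i}\bigr)\le(\hat a_{n,n-j}-1)\,R_{n-j}+\hat b_{n,n-1}+\sum_{i=n-j+1}^{n-1}\hat a_{n,i}\,\hat b_{i,i-1}.$$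
   Context: Setting: a timing packet traverses a chain of nodes $1,\ldots,n$; $L_i=\tau^{i,l}(t_{i,l})$ is the receive time-stamp of node $i$ and $R_i=\tau^{i,r}(t_{i,r})$ the send time-stamp of node $i$, generated by arbitrary ''left'' and ''right'' clocks. $\hat a_{i,i-1},\hat b_{i,i-1}$ are declared relative skews and offsets; $L_i=\hat a_{i,i-1}R_{i-1}+\hat b_{i,i-1}$ is the skew-consistency condition and $L_i\le R_i$ is causality. *)

(* Defs.v *)
From mathcomp Require Import all_boot all_order all_algebra.
Set Implicit Arguments. Unset Strict Implicit. Unset Printing Implicit Defensive.
Import Order.TTheory GRing.Theory Num.Theory.
Local Open Scope ring_scope.

(* a i stands for \hat a_{i,i-1} (2 <= i <= n).
   ahat a k m = \hat a_{k,m} = \prod_{i=m+1}^{k} \hat a_{i,i-1}. *)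
Definition ahat (R : pzRingType) (a : nat -> R) (k m : nat) : R :=
  \prod_(m.+1 <= i < k.+1) a i.

(* Main.v *)
Require Import Defs.
From mathcomp Require Import all_boot all_order all_algebra.
From mathcomp Require Import zify ring lra.
Import Order.TTheory GRing.Theory Num.Theory.
Local Open Scope ring_scope.

Theorem lemma2 (F : realFieldType) (n : nat) (a b L R : nat -> F) :
  (2 <= n)%N ->
  (forall i, (2 <= i <= n)%N -> 0 < a i) ->
  (forall i, (2 <= i <= n)%N -> L i = a i * R i.-1 + b i) ->
  (forall i, (2 <= i <= n.-1)%N -> L i <= R i) ->
  (forall j, (1 <= j <= n.-1)%N -> ahat a n (n - j)%N <= 1) ->
  forall j, (1 <= j <= n.-1)%N ->
    \sum_(1 <= i < j.+1) (L (n - (i - 1))%N - R (n - i)%N)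
      <= (ahat a n (n - j)%N - 1) * R (n - j)%N + b n
         + \sum_((n - j).+1 <= i < n) ahat a n i * b i.
Proof.
move=> n2 _ HL HLR Ha.
elim=> [|j IH]; first by [].
move=> /andP[_ hj].
case: j IH hj => [|j] IH hj.
  rewrite big_nat1 /= subn0 (HL n) ?n2 ?leqnn //.
  have -> : (n - 1).+1 = n by lia.
  rewrite big_geq // /ahat.
  have -> : (n - 1).+1 = n by lia.
  rewrite big_nat1 addr0.
  have -> : n.-1 = (n - 1)%N by lia.
  lra.
have {}IH := IH (ltac:(apply/andP; split; lia)).
rewrite big_nat_recr //=.
set j1 := j.+1 in IH hj *.
have e1 : (n - j.+2).+1 = (n - j1)%N by rewrite /j1; lia.
have e2 : (n - (j.+2 - 1))%N = (n - j1)%N by rewrite /j1; lia.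
have Hs : \sum_((n - j.+2).+1 <= i < n) ahat a n i * b i
    = ahat a n (n - j1) * b (n - j1)%N + \sum_((n - j1).+1 <= i < n) ahat a n i * b i.
  by rewrite e1 big_ltn //; rewrite /j1; lia.
rewrite e2 Hs.
have Hah : ahat a n (n - j.+2) = a (n - j1)%N * ahat a n (n - j1).
  rewrite /ahat e1 big_ltn //; rewrite /j1; lia.
rewrite Hah.
have HLe := HL (n - j1)%N (ltac:(apply/andP; split; rewrite /j1; lia)).
have hpr : (n - j1).-1 = (n - j.+2)%N by rewrite /j1; lia.
rewrite hpr in HLe.
have HLR' := HLR (n - j1)%N (ltac:(apply/andP; split; rewrite /j1; lia)).
have HA := Ha j1 (ltac:(apply/andP; split; rewrite /j1; lia)).
set A := ahat a n (n - j1) in IH HA *.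
set S1 := \sum_(1 <= i < j1.+1) _ in IH *.
set S2 := \sum_((n - j1).+1 <= i < n) _ in IH *.
have key : (1 - A) * L (n - j1)%N <= (1 - A) * R (n - j1)%N.
  by apply: ler_wpM2l; lra.
rewrite HLe in key *.
nra.
Qed.
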